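(* Let $m_1,m_2\in\mathbb{N}$ be relatively prime and $\alpha\in\mathbb{R}$. (i) If $m_1+m_2$ is odd, then the set $\mathrm{LS}_\alpha=\{\boldsymbol{\varrho}^{(\boldsymbol{m})}_\alpha(t_l):\ l\in\{0,\dots,4m_1m_2-1\}\}$, with $t_l=\frac{l\pi}{2m_1m_2}$, is exactly the union of all self-intersection points and all boundary points of the closed curve $\boldsymbol{\varrho}^{(\boldsymbol{m})}_\alpha$. It contains $2m_1m_2+1$ points: the center $(0,0)$, which is traversed $2m_2$ times in one period $2\pi$; $2(m_1-1)m_2$ ordinary double points distinct from $(0,0)$; and $2m_2$ points on the unit circle. (ii) If $m_1+m_2$ is even, then the curve $\boldsymbol{\varrho}^{(\boldsymbol{m})}_\alpha$ has $\frac12(m_1-1)m_2$ ordinary double points distinct from $(0,0)$ and $m_2$ points on the unit circle, and the center $(0,0)$ is traversed $m_2$ times in one (minimal) period $\pi$.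
   Context: For $\boldsymbol{m}=(m_1,m_2)\in\mathbb{N}^2$ and $\alpha\in\mathbb{R}$, the rhodonea curve is $\boldsymbol{\varrho}^{(\boldsymbol{m})}_\alpha(t)=\big(\cos(m_2t)\cos(m_1t-\alpha\pi),\ \cos(m_2t)\sin(m_1t-\alpha\pi)\big)$, $t\in\mathbb{R}$, with values in the unit disk $\mathbb{D}=\{x\in\mathbb{R}^2:|x|\le1\}$. For relatively prime $m_1,m_2$ its minimal period $P$ is $2\pi$ if $m_1+m_2$ is odd and $\pi$ if $m_1+m_2$ is even. A point $x$ of the curve is a self-intersection point if there are at least two distinct parameters $t\in[0,P)$ with $\boldsymbol{\varrho}^{(\boldsymbol{m})}_\alpha(t)=x$; it is an ordinary double point if there are exactly two such parameters; it is a boundary point if $|x|=1$. ''Traversed $k$ times in one period'' means there are exactly $k$ parameters $t\in[0,P)$ with $\boldsymbol{\varrho}^{(\boldsymbol{m})}_\alpha(t)=x$. *)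

(* Defs.v *)
From Stdlib Require Import Reals Lra Lia List.
Open Scope R_scope.

Definition rho (m1 m2 : nat) (alpha t : R) : R * R :=
  (cos (INR m2 * t) * cos (INR m1 * t - alpha * PI),
   cos (INR m2 * t) * sin (INR m1 * t - alpha * PI)).

Definition period (m1 m2 : nat) : R :=
  if Nat.odd (m1 + m2) then 2 * PI else PI.

Definition on_curve (m1 m2 : nat) (alpha : R) (x : R * R) : Prop :=
  exists t : R, rho m1 m2 alpha t = x.

Definition traversed (m1 m2 : nat) (alpha : R) (x : R * R) (k : nat) : Prop :=
  exists L : list R, NoDup L /\ length L = k /\
    forall t : R, In t L <->
      (0 <= t < period m1 m2 /\ rho m1 m2 alpha t = x).

Definition self_intersection (m1 m2 : nat) (alpha : R) (x : R * R) : Prop :=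
  exists t1 t2 : R, t1 <> t2 /\
    0 <= t1 < period m1 m2 /\ 0 <= t2 < period m1 m2 /\
    rho m1 m2 alpha t1 = x /\ rho m1 m2 alpha t2 = x.

Definition ordinary_double_point (m1 m2 : nat) (alpha : R) (x : R * R) : Prop :=
  traversed m1 m2 alpha x 2.

Definition boundary_point (m1 m2 : nat) (alpha : R) (x : R * R) : Prop :=
  on_curve m1 m2 alpha x /\ sqrt (fst x * fst x + snd x * snd x) = 1.

Definition LS (m1 m2 : nat) (alpha : R) (x : R * R) : Prop :=
  exists l : nat, (l < 4 * m1 * m2)%nat /\
    x = rho m1 m2 alpha (INR l * PI / (2 * INR m1 * INR m2)).

Definition has_card (S : R * R -> Prop) (n : nat) : Prop :=
  exists L : list (R * R), NoDup L /\ length L = n /\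
    forall x, In x L <-> S x.

(* Main.v *)
Require Import Defs.
From Stdlib Require Import Reals Lra Lia List ZArith Znumtheory.
Open Scope R_scope.

Lemma cancel_PI x y : x * PI = y * PI -> x = y.
Proof. intro H. apply Rmult_eq_reg_r with PI; [lra|]. pose proof PI_RGT_0; lra. Qed.

Lemma cos_eq_cos a b : cos a = cos b ->
  exists q : Z, a = b + 2 * IZR q * PI \/ a = - b + 2 * IZR q * PI.
Proof.
  intro H. pose proof (form2 a b) as F.
  assert (E : sin ((a - b) / 2) * sin ((a + b) / 2) = 0) by lra.
  apply Rmult_integral in E. destruct E as [E|E]; apply sin_eq_0_0 in E;
  destruct E as [k Hk]; exists k; [left|right]; lra.
Qed.

Lemma shift_parity (k : Z) : forall y,
  (Z.even k = true -> cos (y + IZR k * PI) = cos y /\ sin (y + IZR k * PI) = sin y) /\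
  (Z.even k = false -> cos (y + IZR k * PI) = - cos y /\ sin (y + IZR k * PI) = - sin y).
Proof.
  induction k using Z.peano_ind; intro y.
  - simpl. rewrite Rmult_0_l, Rplus_0_r. split; intro H; [auto|discriminate].
  - rewrite Z.even_succ, <- Z.negb_even, succ_IZR.
    replace (y + (IZR k + 1) * PI) with ((y + IZR k * PI) + PI) by ring.
    rewrite neg_cos, neg_sin. destruct (IHk y) as [A B].
    destruct (Z.even k); simpl; split; intro H; try discriminate.
    + destruct (A eq_refl) as [A1 A2]; rewrite A1, A2; auto.
    + destruct (B eq_refl) as [A1 A2]; rewrite A1, A2; split; ring.
  - rewrite Z.even_pred, <- Z.negb_even, <- Z.sub_1_r, minus_IZR.
    destruct (IHk y) as [A B].
    assert (C : cos (y + IZR k * PI) = - cos (y + (IZR k - 1) * PI) /\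
                sin (y + IZR k * PI) = - sin (y + (IZR k - 1) * PI)).
    { replace (y + IZR k * PI) with ((y + (IZR k - 1) * PI) + PI) by ring.
      rewrite neg_cos, neg_sin; auto. }
    destruct C as [C1 C2].
    destruct (Z.even k); simpl; split; intro H; try discriminate.
    + destruct (A eq_refl) as [A1 A2]. split; lra.
    + destruct (B eq_refl) as [A1 A2]. split; lra.
Qed.

Lemma cos_2q x q : cos (x + 2 * IZR q * PI) = cos x.
Proof.
  replace (2 * IZR q * PI) with (IZR (2*q) * PI) by (rewrite mult_IZR; ring).
  apply (shift_parity (2*q) x). rewrite Z.even_mul; reflexivity.
Qed.

Lemma rho_shift m1 m2 alpha t t' (a b : Z) :
  cos (INR m2 * t') = cos (INR m2 * t + IZR a * PI) ->
  INR m1 * t' = INR m1 * t + IZR b * PI -> Z.even a = Z.even b ->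
  rho m1 m2 alpha t' = rho m1 m2 alpha t.
Proof.
  intros H1 H2 H3. unfold rho. rewrite H1.
  replace (INR m1 * t' - alpha * PI) with ((INR m1 * t - alpha * PI) + IZR b * PI) by lra.
  destruct (shift_parity a (INR m2 * t)) as [A1 A2].
  destruct (shift_parity b (INR m1 * t - alpha * PI)) as [B1 B2].
  rewrite <- H3 in B1, B2.
  destruct (Z.even a).
  - destruct (A1 eq_refl) as [-> _]; destruct (B1 eq_refl) as [-> ->]; auto.
  - destruct (A2 eq_refl) as [-> _]; destruct (B2 eq_refl) as [-> ->]. f_equal; ring.
Qed.

Lemma rho_zero m1 m2 alpha t :
  rho m1 m2 alpha t = (0,0) <-> cos (INR m2 * t) = 0.
Proof.
  unfold rho. split.
  - intro H. injection H as H1 H2.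
    pose proof (sin2_cos2 (INR m1 * t - alpha * PI)) as S. unfold Rsqr in S.
    set (c := cos (INR m2 * t)) in *.
    assert (c * c = 0) by nra. nra.
  - intro H. rewrite H. f_equal; ring.
Qed.

Lemma rho_norm m1 m2 alpha t :
  let x := rho m1 m2 alpha t in
  fst x * fst x + snd x * snd x = cos (INR m2 * t) * cos (INR m2 * t).
Proof.
  simpl. pose proof (sin2_cos2 (INR m1 * t - alpha * PI)) as S. unfold Rsqr in S. nra.
Qed.

Lemma rho_eq_inv m1 m2 alpha t s :
  rho m1 m2 alpha t = rho m1 m2 alpha s -> cos (INR m2 * s) <> 0 ->
  exists k q : Z, INR m1 * (t - s) = IZR k * PI /\
    (INR m2 * t = INR m2 * s + IZR k * PI + 2 * IZR q * PI \/
     INR m2 * t = - (INR m2 * s + IZR k * PI) + 2 * IZR q * PI).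
Proof.
  unfold rho. intros H Hs. injection H as H1 H2.
  set (a := INR m2 * t) in *. set (b := INR m2 * s) in *.
  set (th := INR m1 * t - alpha * PI) in *. set (ph := INR m1 * s - alpha * PI) in *.
  pose proof (sin2_cos2 th) as St. pose proof (sin2_cos2 ph) as Sp. unfold Rsqr in St, Sp.
  assert (Sq : cos a * cos a = cos b * cos b).
  { transitivity ((cos a * cos th) * (cos a * cos th) + (cos a * sin th) * (cos a * sin th)).
    - replace ((cos a * cos th) * (cos a * cos th) + (cos a * sin th) * (cos a * sin th))
        with (cos a * cos a * (sin th * sin th + cos th * cos th)) by ring. rewrite St; ring.
    - rewrite H1, H2.
      replace ((cos b * cos ph) * (cos b * cos ph) + (cos b * sin ph) * (cos b * sin ph))
        with (cos b * cos b * (sin ph * sin ph + cos ph * cos ph)) by ring. rewrite Sp; ring. }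
  assert (Cs : cos a = cos b \/ cos a = - cos b).
  { assert (E : (cos a - cos b) * (cos a + cos b) = 0) by (replace ((cos a - cos b) * (cos a + cos b)) with (cos a * cos a - cos b * cos b) by ring; lra).
    apply Rmult_integral in E; destruct E; [left|right]; lra. }
  destruct Cs as [Ca|Ca].
  - assert (ct : cos th = cos ph).
    { apply Rmult_eq_reg_l with (cos b); auto. rewrite Ca in H1, H2; nra. }
    assert (st : sin th = sin ph).
    { apply Rmult_eq_reg_l with (cos b); auto. rewrite Ca in H1, H2; nra. }
    assert (c1 : cos (th - ph) = cos 0).
    { rewrite cos_minus, cos_0, ct, st. lra. }
    destruct (cos_eq_cos _ _ c1) as [k' Hk'].
    destruct (cos_eq_cos _ _ Ca) as [q Hq].
    exists (2 * k')%Z.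
    assert (Ek : INR m1 * (t - s) = IZR (2 * k') * PI).
    { rewrite mult_IZR. unfold th, ph in Hk'. lra. }
    destruct Hq as [Hq|Hq].
    + exists (q - k')%Z. split; auto. left. rewrite minus_IZR, mult_IZR. lra.
    + exists (q + k')%Z. split; auto. right. rewrite plus_IZR, mult_IZR. lra.
  - assert (ct : cos th = - cos ph).
    { apply Rmult_eq_reg_l with (cos b); auto. rewrite Ca in H1, H2; nra. }
    assert (st : sin th = - sin ph).
    { apply Rmult_eq_reg_l with (cos b); auto. rewrite Ca in H1, H2; nra. }
    assert (c1 : cos (th - ph) = cos PI).
    { rewrite cos_minus, cos_PI, ct, st. lra. }
    destruct (cos_eq_cos _ _ c1) as [k' Hk'].
    assert (Cb : cos a = cos (b + PI)) by (rewrite neg_cos; auto).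
    destruct (cos_eq_cos _ _ Cb) as [q Hq].
    destruct Hk' as [Hk'|Hk'].
    + exists (2 * k' + 1)%Z.
      assert (Ek : INR m1 * (t - s) = IZR (2 * k' + 1) * PI).
      { rewrite plus_IZR, mult_IZR. unfold th, ph in Hk'. lra. }
      destruct Hq as [Hq|Hq].
      * exists (q - k')%Z. split; auto. left. rewrite plus_IZR, minus_IZR, mult_IZR. lra.
      * exists (q + k')%Z. split; auto. right. rewrite !plus_IZR, mult_IZR. lra.
    + exists (2 * k' - 1)%Z.
      assert (Ek : INR m1 * (t - s) = IZR (2 * k' - 1) * PI).
      { rewrite minus_IZR, mult_IZR. unfold th, ph in Hk'. lra. }
      destruct Hq as [Hq|Hq].
      * exists (q - k' + 1)%Z. split; auto. left. repeat rewrite ?plus_IZR, ?minus_IZR, ?mult_IZR. lra.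
      * exists (q + k' - 1)%Z. split; auto. right. repeat rewrite ?plus_IZR, ?minus_IZR, ?mult_IZR. lra.
Qed.

Definition tg (m1 m2 : nat) (j : Z) : R := IZR j * PI / (2 * INR m1 * INR m2).

Ltac ZR := repeat rewrite ?plus_IZR, ?minus_IZR, ?mult_IZR, ?opp_IZR.

Lemma INR_ge1 m : (1 <= m)%nat -> 1 <= INR m.
Proof. intro H. apply (le_INR 1 m) in H. simpl in H. lra. Qed.

Lemma tg_m2 m1 m2 j : (1 <= m1)%nat -> (1 <= m2)%nat ->
  INR m2 * tg m1 m2 j = IZR j * PI / (2 * IZR (Z.of_nat m1)).
Proof.
  intros h1 h2. pose proof (INR_ge1 _ h1). pose proof (INR_ge1 _ h2).
  unfold tg. rewrite <- INR_IZR_INZ. field. lra.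
Qed.

Lemma tg_m1 m1 m2 j : (1 <= m1)%nat -> (1 <= m2)%nat ->
  INR m1 * tg m1 m2 j = IZR j * PI / (2 * IZR (Z.of_nat m2)).
Proof.
  intros h1 h2. pose proof (INR_ge1 _ h1). pose proof (INR_ge1 _ h2).
  unfold tg. rewrite <- INR_IZR_INZ. field. lra.
Qed.

Lemma tg_inj m1 m2 j l : (1 <= m1)%nat -> (1 <= m2)%nat ->
  tg m1 m2 j = tg m1 m2 l -> j = l.
Proof.
  intros h1 h2 H. pose proof (INR_ge1 _ h1). pose proof (INR_ge1 _ h2).
  pose proof PI_RGT_0. unfold tg in H. apply eq_IZR.
  apply cancel_PI. apply Rmult_eq_reg_r with (/ (2 * INR m1 * INR m2)).
  - unfold Rdiv in H. lra.
  - apply Rinv_neq_0_compat. nra.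
Qed.

Lemma tg_add m1 m2 j l : tg m1 m2 (j + l) = tg m1 m2 j + tg m1 m2 l.
Proof. unfold tg. rewrite plus_IZR. unfold Rdiv. ring. Qed.

Lemma tg_mono m1 m2 j l : (1 <= m1)%nat -> (1 <= m2)%nat ->
  (tg m1 m2 j <= tg m1 m2 l <-> (j <= l)%Z) /\ (tg m1 m2 j < tg m1 m2 l <-> (j < l)%Z).
Proof.
  intros h1 h2. pose proof (INR_ge1 _ h1). pose proof (INR_ge1 _ h2).
  pose proof PI_RGT_0. unfold tg.
  assert (P : 0 < PI / (2 * INR m1 * INR m2)).
  { unfold Rdiv. apply Rmult_lt_0_compat; auto. apply Rinv_0_lt_compat. nra. }
  replace (IZR j * PI / (2 * INR m1 * INR m2)) with (IZR j * (PI / (2 * INR m1 * INR m2))) by (unfold Rdiv; ring).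
  replace (IZR l * PI / (2 * INR m1 * INR m2)) with (IZR l * (PI / (2 * INR m1 * INR m2))) by (unfold Rdiv; ring).
  split; split; intro HH.
  - apply le_IZR. apply Rmult_le_reg_r with (PI / (2 * INR m1 * INR m2)); auto.
  - apply Rmult_le_compat_r; [lra|]. apply IZR_le; auto.
  - apply lt_IZR. apply Rmult_lt_reg_r with (PI / (2 * INR m1 * INR m2)); auto.
  - apply Rmult_lt_compat_r; auto. apply IZR_lt; auto.
Qed.

Lemma grid_zero m1 m2 j : (1 <= m1)%nat -> (1 <= m2)%nat ->
  cos (INR m2 * tg m1 m2 j) = 0 <-> exists c, j = (Z.of_nat m1 * (2 * c + 1))%Z.
Proof.
  intros h1 h2. pose proof (INR_ge1 _ h1). rewrite INR_IZR_INZ in H.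
  pose proof PI_RGT_0. rewrite tg_m2 by auto. split.
  - intro E. apply cos_eq_0_0 in E. destruct E as [k Hk]. exists k.
    apply eq_IZR. apply cancel_PI.
    assert (E : IZR j * PI = (IZR k * PI + PI / 2) * (2 * IZR (Z.of_nat m1))) by (rewrite <- Hk; field; lra).
    rewrite E. ZR. simpl. field.
  - intros [c ->]. apply cos_eq_0_1. exists c. ZR. simpl. field. lra.
Qed.

Lemma zero_grid m1 m2 t : (1 <= m1)%nat -> (1 <= m2)%nat ->
  cos (INR m2 * t) = 0 -> exists c, t = tg m1 m2 (Z.of_nat m1 * (2 * c + 1))%Z.
Proof.
  intros h1 h2 E. pose proof (INR_ge1 _ h1). pose proof (INR_ge1 _ h2).
  apply cos_eq_0_0 in E. destruct E as [k Hk]. exists k. unfold tg.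
  ZR. rewrite <- INR_IZR_INZ. simpl.
  apply Rmult_eq_reg_l with (INR m2); [|lra]. rewrite Hk. field. lra.
Qed.

Lemma cos_kPI k : cos (IZR k * PI) * cos (IZR k * PI) = 1.
Proof.
  destruct (shift_parity k 0) as [A B]. rewrite Rplus_0_l in A, B.
  destruct (Z.even k).
  - destruct (A eq_refl) as [-> _]. rewrite cos_0; ring.
  - destruct (B eq_refl) as [-> _]. rewrite cos_0; ring.
Qed.

Lemma sq1_sin x : cos x * cos x = 1 -> sin x = 0.
Proof. intro H. pose proof (sin2_cos2 x). unfold Rsqr in H0. nra. Qed.

Lemma grid_bd m1 m2 j : (1 <= m1)%nat -> (1 <= m2)%nat ->
  cos (INR m2 * tg m1 m2 j) * cos (INR m2 * tg m1 m2 j) = 1 <->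
  exists c, j = (2 * Z.of_nat m1 * c)%Z.
Proof.
  intros h1 h2. pose proof (INR_ge1 _ h1). rewrite INR_IZR_INZ in H.
  pose proof PI_RGT_0. rewrite tg_m2 by auto. split.
  - intro E. apply sq1_sin, sin_eq_0_0 in E. destruct E as [k Hk]. exists k.
    apply eq_IZR. apply cancel_PI.
    assert (E : IZR j * PI = (IZR k * PI) * (2 * IZR (Z.of_nat m1))) by (rewrite <- Hk; field; lra).
    rewrite E. ZR. simpl. ring.
  - intros [c ->]. replace (IZR (2 * Z.of_nat m1 * c) * PI / (2 * IZR (Z.of_nat m1)))
      with (IZR c * PI) by (ZR; simpl; field; lra). apply cos_kPI.
Qed.

Lemma bd_grid m1 m2 t : (1 <= m1)%nat -> (1 <= m2)%nat ->
  cos (INR m2 * t) * cos (INR m2 * t) = 1 -> exists c, t = tg m1 m2 (2 * Z.of_nat m1 * c)%Z.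
Proof.
  intros h1 h2 E. pose proof (INR_ge1 _ h1). pose proof (INR_ge1 _ h2).
  apply sq1_sin, sin_eq_0_0 in E. destruct E as [k Hk]. exists k. unfold tg.
  ZR. rewrite <- INR_IZR_INZ. simpl.
  apply Rmult_eq_reg_l with (INR m2); [|lra]. rewrite Hk. field. lra.
Qed.

Definition NN (m1 m2 : nat) : Z :=
  if Nat.odd (m1 + m2) then (4 * Z.of_nat m1 * Z.of_nat m2)%Z
  else (2 * Z.of_nat m1 * Z.of_nat m2)%Z.

Lemma bezout_Z m1 m2 : (1 <= m1)%nat -> Nat.gcd m1 m2 = 1%nat ->
  exists u v : Z, (u * Z.of_nat m1 + v * Z.of_nat m2 = 1)%Z.
Proof.
  intros h1 hg. destruct (Nat.gcd_bezout_pos m1 m2 ltac:(lia)) as [a [b Hab]].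
  rewrite hg in Hab. exists (Z.of_nat a), (- Z.of_nat b)%Z. lia.
Qed.

Lemma parity_cases m1 m2 :
  (Nat.odd (m1 + m2) = true /\ exists h, (Z.of_nat m1 + Z.of_nat m2 = 2 * h + 1)%Z) \/
  (Nat.odd (m1 + m2) = false /\ exists h, (Z.of_nat m1 + Z.of_nat m2 = 2 * h)%Z).
Proof.
  destruct (Nat.Even_or_Odd (m1 + m2)) as [[h Hh]|[h Hh]].
  - right. split.
    + rewrite Hh. apply Nat.odd_even.
    + exists (Z.of_nat h). lia.
  - left. split.
    + apply Nat.odd_spec. exists h. auto.
    + exists (Z.of_nat h). lia.
Qed.

Lemma KEY m1 m2 (k : Z) : (1 <= m1)%nat -> (1 <= m2)%nat -> Nat.gcd m1 m2 = 1%nat ->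
  (2 * Z.of_nat m1 | k * (Z.of_nat m1 + Z.of_nat m2))%Z ->
  (NN m1 m2 | 2 * Z.of_nat m2 * k)%Z.
Proof.
  intros h1 h2 hg Hd. destruct (bezout_Z m1 m2 h1 hg) as [u [v Huv]].
  set (z1 := Z.of_nat m1) in *. set (z2 := Z.of_nat m2) in *. unfold NN.
  destruct (parity_cases m1 m2) as [[Ho [h Hh]]|[Ho [h Hh]]]; rewrite Ho; fold z1 z2 in Hh |- *.
  - assert (R1 : rel_prime (2 * z1) (z1 + z2)).
    { apply rel_prime_sym. apply rel_prime_mult.
      - apply bezout_rel_prime. apply (Bezout_intro _ _ _ 1 (- h)). lia.
      - apply bezout_rel_prime. apply (Bezout_intro _ _ _ v (u - v)). lia. }
    assert (D : (2 * z1 | k)%Z).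
    { apply Gauss with (z1 + z2)%Z; [rewrite (Z.mul_comm (z1+z2) k); exact Hd | exact R1]. }
    destruct D as [r Hr]. exists r. subst k. ring.
  - assert (R1 : rel_prime z1 h).
    { apply bezout_rel_prime. apply (Bezout_intro _ _ _ (u - v) (2 * v)). lia. }
    assert (D : (z1 | h * k)%Z).
    { destruct Hd as [r Hr]. exists r. rewrite Hh in Hr. lia. }
    apply Gauss in D; auto. destruct D as [r Hr]. exists r. subst k. ring.
Qed.

Lemma NN_pos m1 m2 : (1 <= m1)%nat -> (1 <= m2)%nat -> (0 < NN m1 m2)%Z.
Proof. intros. unfold NN. destruct (Nat.odd (m1 + m2)); lia. Qed.

Lemma period_tg m1 m2 : (1 <= m1)%nat -> (1 <= m2)%nat ->
  period m1 m2 = tg m1 m2 (NN m1 m2).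
Proof.
  intros h1 h2. pose proof (INR_ge1 _ h1). pose proof (INR_ge1 _ h2).
  unfold period, NN, tg. destruct (Nat.odd (m1 + m2)); ZR; simpl;
  rewrite <- !INR_IZR_INZ; field; lra.
Qed.

Lemma range_tg m1 m2 j : (1 <= m1)%nat -> (1 <= m2)%nat ->
  (0 <= tg m1 m2 j < period m1 m2) <-> (0 <= j < NN m1 m2)%Z.
Proof.
  intros h1 h2. rewrite period_tg by auto.
  replace 0 with (tg m1 m2 0%Z) by (unfold tg; simpl; unfold Rdiv; ring).
  destruct (tg_mono m1 m2 0%Z j h1 h2) as [A _]. destruct (tg_mono m1 m2 j (NN m1 m2) h1 h2) as [_ B].
  rewrite A, B. tauto.
Qed.

Lemma grid_per m1 m2 alpha j c : (1 <= m1)%nat -> (1 <= m2)%nat ->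
  rho m1 m2 alpha (tg m1 m2 (j + NN m1 m2 * c)) = rho m1 m2 alpha (tg m1 m2 j).
Proof.
  intros h1 h2. pose proof (INR_ge1 _ h1). pose proof (INR_ge1 _ h2).
  pose proof PI_RGT_0.
  unfold NN. destruct (parity_cases m1 m2) as [[Ho [h Hh]]|[Ho [h Hh]]]; rewrite Ho.
  - apply rho_shift with (2 * Z.of_nat m2 * c)%Z (2 * Z.of_nat m1 * c)%Z.
    + f_equal. unfold tg. ZR. rewrite <- !INR_IZR_INZ. simpl. field. lra.
    + unfold tg. ZR. rewrite <- !INR_IZR_INZ. simpl. field. lra.
    + rewrite !Z.even_mul. reflexivity.
  - apply rho_shift with (Z.of_nat m2 * c)%Z (Z.of_nat m1 * c)%Z.
    + f_equal. unfold tg. ZR. rewrite <- !INR_IZR_INZ. simpl. field. lra.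
    + unfold tg. ZR. rewrite <- !INR_IZR_INZ. simpl. field. lra.
    + rewrite !Z.even_mul. f_equal.
      assert (E : Z.even (Z.of_nat m1 + Z.of_nat m2) = true) by (rewrite Hh, Z.even_mul; auto).
      rewrite Z.even_add in E. destruct (Z.even (Z.of_nat m1)), (Z.even (Z.of_nat m2)); auto; discriminate.
Qed.

Lemma div_int (a b z : Z) : (0 < z)%Z -> IZR a * PI / (2 * IZR z) = IZR b * PI ->
  a = (2 * z * b)%Z.
Proof.
  intros hz H. apply IZR_lt in hz. pose proof PI_RGT_0.
  apply eq_IZR, cancel_PI.
  assert (E : IZR a * PI = (IZR a * PI / (2 * IZR z)) * (2 * IZR z)) by (field; lra).
  rewrite E, H. ZR. simpl. ring.
Qed.

Lemma grid_fwd m1 m2 alpha j l : (1 <= m1)%nat -> (1 <= m2)%nat ->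
  rho m1 m2 alpha (tg m1 m2 j) = rho m1 m2 alpha (tg m1 m2 l) ->
  cos (INR m2 * tg m1 m2 l) <> 0 ->
  exists k, (j - l = 2 * Z.of_nat m2 * k)%Z /\
    ((2 * Z.of_nat m1 | k * (Z.of_nat m1 + Z.of_nat m2))%Z \/
     (2 * Z.of_nat m1 | l + k * (Z.of_nat m1 + Z.of_nat m2))%Z).
Proof.
  intros h1 h2 H Hc. pose proof (INR_ge1 _ h1). pose proof (INR_ge1 _ h2).
  rewrite INR_IZR_INZ in H0, H1. pose proof PI_RGT_0.
  destruct (rho_eq_inv _ _ _ _ _ H Hc) as [k [q [Hk Hq]]].
  exists k.
  assert (E1 : (j - l = 2 * Z.of_nat m2 * k)%Z).
  { apply div_int; [lia|]. rewrite <- Hk. rewrite Rmult_minus_distr_l, !tg_m1 by auto.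
    ZR. field. lra. }
  split; auto.
  rewrite !tg_m2 in Hq by auto.
  destruct Hq as [Hq|Hq].
  - assert (E2 : (j - l = 2 * Z.of_nat m1 * (k + 2 * q))%Z).
    { apply div_int; [lia|]. ZR. replace (IZR j) with (IZR j * PI / (2 * IZR (Z.of_nat m1)) * (2 * IZR (Z.of_nat m1)) / PI) by (field; lra).
      rewrite Hq. field. lra. }
    left. exists (k + q)%Z. nia.
  - assert (E2 : (j + l = 2 * Z.of_nat m1 * (- k + 2 * q))%Z).
    { apply div_int; [lia|]. ZR. replace (IZR j) with (IZR j * PI / (2 * IZR (Z.of_nat m1)) * (2 * IZR (Z.of_nat m1)) / PI) by (field; lra).
      rewrite Hq. field. lra. }
    right. exists q. nia.
Qed.

Lemma grid_bwd m1 m2 alpha j l k : (1 <= m1)%nat -> (1 <= m2)%nat ->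
  (j - l = 2 * Z.of_nat m2 * k)%Z ->
  (2 * Z.of_nat m1 | l + k * (Z.of_nat m1 + Z.of_nat m2))%Z ->
  rho m1 m2 alpha (tg m1 m2 j) = rho m1 m2 alpha (tg m1 m2 l).
Proof.
  intros h1 h2 E [q Hq]. pose proof (INR_ge1 _ h1). pose proof (INR_ge1 _ h2).
  rewrite INR_IZR_INZ in H, H0. pose proof PI_RGT_0.
  apply rho_shift with k k; auto.
  - rewrite !tg_m2 by auto.
    replace (IZR j * PI / (2 * IZR (Z.of_nat m1))) with
      (- (IZR l * PI / (2 * IZR (Z.of_nat m1)) + IZR k * PI) + 2 * IZR q * PI).
    + rewrite cos_2q, cos_neg. auto.
    + assert (Ej : j = (- l - 2 * Z.of_nat m1 * k + 2 * (q * (2 * Z.of_nat m1)))%Z) by lia.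
      rewrite Ej. ZR. simpl. field. lra.
  - rewrite !tg_m1 by auto. assert (Ej : j = (l + 2 * Z.of_nat m2 * k)%Z) by lia.
    rewrite Ej. ZR. simpl. field. lra.
Qed.

Lemma grid_of m1 m2 alpha t l : (1 <= m1)%nat -> (1 <= m2)%nat ->
  rho m1 m2 alpha t = rho m1 m2 alpha (tg m1 m2 l) ->
  cos (INR m2 * tg m1 m2 l) <> 0 -> exists j, t = tg m1 m2 j.
Proof.
  intros h1 h2 H Hc. pose proof (INR_ge1 _ h1). pose proof (INR_ge1 _ h2).
  destruct (rho_eq_inv _ _ _ _ _ H Hc) as [k [q [Hk _]]].
  exists (l + 2 * Z.of_nat m2 * k)%Z.
  apply Rmult_eq_reg_l with (INR m1); [|lra].
  rewrite tg_add, Rmult_plus_distr_l, (tg_m1 _ _ (2 * Z.of_nat m2 * k)%Z) by auto.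
  replace (IZR (2 * Z.of_nat m2 * k) * PI / (2 * IZR (Z.of_nat m2))) with (IZR k * PI).
  - lra.
  - rewrite <- INR_IZR_INZ in *. ZR. rewrite <- INR_IZR_INZ. simpl. field. lra.
Qed.

Lemma si_grid m1 m2 alpha t1 t2 : (1 <= m1)%nat -> (1 <= m2)%nat -> Nat.gcd m1 m2 = 1%nat ->
  0 <= t1 < period m1 m2 -> 0 <= t2 < period m1 m2 -> t1 <> t2 ->
  rho m1 m2 alpha t1 = rho m1 m2 alpha t2 -> cos (INR m2 * t2) <> 0 ->
  exists j, t1 = tg m1 m2 j.
Proof.
  intros h1 h2 hg R1 R2 Hne H Hc. pose proof (INR_ge1 _ h1) as M1. pose proof (INR_ge1 _ h2) as M2.
  pose proof PI_RGT_0.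
  destruct (rho_eq_inv _ _ _ _ _ H Hc) as [k [q [Hk Hq]]].
  destruct Hq as [Hq|Hq].
  - exfalso.
    assert (E : (Z.of_nat m2 * k = Z.of_nat m1 * (k + 2 * q))%Z).
    { apply eq_IZR. apply cancel_PI. ZR. rewrite <- !INR_IZR_INZ.
      transitivity (INR m2 * (INR m1 * (t1 - t2))); [rewrite Hk; ring|].
      transitivity (INR m1 * (INR m2 * t1 - INR m2 * t2)); [ring|]. rewrite Hq. ring. }
    assert (D : (2 * Z.of_nat m1 | k * (Z.of_nat m1 + Z.of_nat m2))%Z).
    { exists (k + q)%Z. nia. }
    destruct (KEY _ _ _ h1 h2 hg D) as [r Hr].
    assert (Et : t1 - t2 = tg m1 m2 (r * NN m1 m2)).
    { rewrite <- Hr. unfold tg. apply Rmult_eq_reg_l with (INR m1); [|lra].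
      rewrite Hk. ZR. rewrite <- !INR_IZR_INZ. simpl. field. lra. }
    rewrite period_tg in R1, R2 by auto.
    assert (r = 0)%Z.
    { destruct (tg_mono m1 m2 (r * NN m1 m2) (NN m1 m2) h1 h2) as [_ A].
      destruct (tg_mono m1 m2 (- NN m1 m2) (r * NN m1 m2) h1 h2) as [_ B].
      assert (tg m1 m2 (- NN m1 m2) = - tg m1 m2 (NN m1 m2)) by (unfold tg; ZR; unfold Rdiv; ring).
      pose proof (NN_pos m1 m2 h1 h2).
      assert (r * NN m1 m2 < NN m1 m2)%Z by (apply A; lra).
      assert (- NN m1 m2 < r * NN m1 m2)%Z by (apply B; lra).
      nia. }
    subst r. rewrite Z.mul_0_l in Et. unfold tg in Et. simpl in Et.
    apply Hne. unfold Rdiv in Et. lra.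
  - exists ((2 * q - k) * Z.of_nat m1 + k * Z.of_nat m2)%Z.
    unfold tg. ZR. rewrite <- !INR_IZR_INZ. simpl.
    apply Rmult_eq_reg_l with (2 * INR m1 * INR m2); [|nra].
    transitivity (INR m2 * (INR m1 * (t1 - t2)) + INR m1 * (INR m2 * t1 + INR m2 * t2)); [ring|].
    rewrite Hk. replace (INR m2 * t1 + INR m2 * t2) with ((2 * IZR q - IZR k) * PI) by lra.
    field. nra.
Qed.

Lemma NoDup_map_on {A B} (f : A -> B) (l : list A) :
  NoDup l -> (forall a b, In a l -> In b l -> f a = f b -> a = b) -> NoDup (map f l).
Proof.
  intros H1 H2. apply NoDup_map_NoDup_ForallPairs; auto.
Qed.

Lemma NoDup_list_prod {A B} (l : list A) (l' : list B) :
  NoDup l -> NoDup l' -> NoDup (list_prod l l').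
Proof.
  induction 1 as [|a l Ha Hl IH]; intro H'; simpl; [constructor|].
  apply NoDup_app; auto.
  - apply NoDup_map_on; auto. intros x y _ _ E. injection E; auto.
  - intros p Hp Hp2. apply in_map_iff in Hp. destruct Hp as [b [<- _]].
    apply in_prod_iff in Hp2. tauto.
Qed.

Lemma half (S : list Z) (sg : Z -> Z) : NoDup S ->
  (forall x, In x S -> In (sg x) S /\ sg x <> x /\ sg (sg x) = x) ->
  (2 * length (filter (fun x => Z.ltb x (sg x)) S) = length S)%nat.
Proof.
  intros ND H. pose proof (filter_length (fun x => Z.ltb x (sg x)) S) as F.
  set (S1 := filter (fun x => Z.ltb x (sg x)) S) in *.
  set (S2 := filter (fun x => negb (Z.ltb x (sg x))) S) in *.
  assert (inj : forall a b, In a S -> In b S -> sg a = sg b -> a = b).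
  { intros a b Ha Hb E. destruct (H a Ha) as [_ [_ Ea]]. destruct (H b Hb) as [_ [_ Eb]].
    rewrite <- Ea, <- Eb, E. auto. }
  assert (A1 : (length S1 <= length S2)%nat).
  { rewrite <- (length_map sg S1). apply NoDup_incl_length.
    - apply NoDup_map_on. apply NoDup_filter; auto.
      intros a b Ha Hb. apply filter_In in Ha. apply filter_In in Hb. apply inj; tauto.
    - intros y Hy. apply in_map_iff in Hy. destruct Hy as [x [<- Hx]].
      apply filter_In in Hx. destruct Hx as [Hx Hl]. destruct (H x Hx) as [B1 [B2 B3]].
      apply filter_In. split; auto. rewrite B3. apply Z.ltb_lt in Hl.
      apply Bool.negb_true_iff. apply Z.ltb_ge. lia. }
  assert (A2 : (length S2 <= length S1)%nat).
  { rewrite <- (length_map sg S2). apply NoDup_incl_length.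
    - apply NoDup_map_on. apply NoDup_filter; auto.
      intros a b Ha Hb. apply filter_In in Ha. apply filter_In in Hb. apply inj; tauto.
    - intros y Hy. apply in_map_iff in Hy. destruct Hy as [x [<- Hx]].
      apply filter_In in Hx. destruct Hx as [Hx Hl]. destruct (H x Hx) as [B1 [B2 B3]].
      apply filter_In. split; auto. rewrite B3. apply Bool.negb_true_iff in Hl. apply Z.ltb_ge in Hl.
      apply Z.ltb_lt. lia. }
  lia.
Qed.

Lemma trav_grid m1 m2 alpha x (J : list Z) : (1 <= m1)%nat -> (1 <= m2)%nat ->
  NoDup J ->
  (forall t, 0 <= t < period m1 m2 -> rho m1 m2 alpha t = x -> exists j, t = tg m1 m2 j) ->
  (forall j, In j J <-> ((0 <= j < NN m1 m2)%Z /\ rho m1 m2 alpha (tg m1 m2 j) = x)) ->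
  traversed m1 m2 alpha x (length J).
Proof.
  intros h1 h2 ND G HJ. exists (map (tg m1 m2) J). split; [|split].
  - apply NoDup_map_on; auto. intros a b _ _ E. exact (tg_inj m1 m2 a b h1 h2 E).
  - apply length_map.
  - intro t. rewrite in_map_iff. split.
    + intros [j [<- Hj]]. apply HJ in Hj. destruct Hj as [R E]. split; auto.
      apply range_tg; auto.
    + intros [R E]. destruct (G t R E) as [j ->]. exists j. split; auto.
      apply HJ. split; auto. apply range_tg; auto.
Qed.

Lemma double_gen m1 m2 alpha (S : list Z) (sg : Z -> Z) :
  (1 <= m1)%nat -> (1 <= m2)%nat -> Nat.gcd m1 m2 = 1%nat -> NoDup S ->
  (forall j, In j S -> (0 <= j < NN m1 m2)%Z /\ cos (INR m2 * tg m1 m2 j) <> 0) ->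
  (forall j, In j S -> In (sg j) S /\ sg j <> j /\
      rho m1 m2 alpha (tg m1 m2 (sg j)) = rho m1 m2 alpha (tg m1 m2 j)) ->
  (forall j i, In j S -> (0 <= i < NN m1 m2)%Z ->
      rho m1 m2 alpha (tg m1 m2 i) = rho m1 m2 alpha (tg m1 m2 j) -> i = j \/ i = sg j) ->
  (forall j i, (0 <= j < NN m1 m2)%Z -> cos (INR m2 * tg m1 m2 j) <> 0 -> ~ In j S ->
      (0 <= i < NN m1 m2)%Z ->
      rho m1 m2 alpha (tg m1 m2 i) = rho m1 m2 alpha (tg m1 m2 j) -> i = j) ->
  let Rp := filter (fun x => Z.ltb x (sg x)) S in
  (2 * length Rp = length S)%nat /\
  NoDup (map (fun j => rho m1 m2 alpha (tg m1 m2 j)) Rp) /\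
  (forall x, In x (map (fun j => rho m1 m2 alpha (tg m1 m2 j)) Rp) <->
     x <> (0,0) /\ ordinary_double_point m1 m2 alpha x) /\
  (forall j, In j S -> exists r, In r Rp /\ rho m1 m2 alpha (tg m1 m2 r) = rho m1 m2 alpha (tg m1 m2 j)).
Proof.
  intros h1 h2 hg ND HS Hsg Huniq Hout Rp.
  assert (Hinv : forall x, In x S -> In (sg x) S /\ sg x <> x /\ sg (sg x) = x).
  { intros x Hx. destruct (Hsg x Hx) as [A [B C]]. split; auto. split; auto.
    destruct (Hsg (sg x) A) as [A' [B' C']].
    destruct (Huniq x (sg (sg x)) Hx (proj1 (HS _ A'))) as [E|E]; auto.
    - congruence.
    - exfalso. apply B'. auto. }
  assert (repsig : forall j, In j S -> exists r, In r Rp /\ (r = j \/ r = sg j)).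
  { intros j Hj. destruct (Hinv j Hj) as [A [B C]].
    destruct (Z_lt_le_dec j (sg j)).
    - exists j. split; auto. apply filter_In. split; auto. apply Z.ltb_lt; auto.
    - exists (sg j). split; auto. apply filter_In. split; auto. apply Z.ltb_lt. rewrite C. lia. }
  split; [apply half; auto|]. split; [|split].
  - apply NoDup_map_on; [apply NoDup_filter; auto|].
    intros a b Ha Hb E. apply filter_In in Ha. apply filter_In in Hb.
    destruct Ha as [Ha La]. destruct Hb as [Hb Lb]. apply Z.ltb_lt in La. apply Z.ltb_lt in Lb.
    destruct (Huniq a b Ha (proj1 (HS _ Hb)) (eq_sym E)) as [Eb|Eb]; subst b; auto.
    destruct (Hinv a Ha) as [_ [_ C]]. rewrite C in Lb. lia.
  - intro x. rewrite in_map_iff. split.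
    + intros [j [<- Hj]]. apply filter_In in Hj. destruct Hj as [Hj _].
      destruct (HS j Hj) as [R Hc]. destruct (Hsg j Hj) as [A [B C]].
      split.
      * intro E. apply rho_zero in E. auto.
      * unfold ordinary_double_point.
        change 2%nat with (length (j :: sg j :: nil)).
        apply trav_grid; auto.
        -- constructor; [simpl; intros [E|[]]; auto|constructor; [simpl; auto|constructor]].
        -- intros t _ Et. eapply grid_of; eauto.
        -- intro i. simpl. split.
           ++ intros [<-|[<-|[]]]; split; auto. apply (HS _ A).
           ++ intros [Ri Ei]. destruct (Huniq j i Hj Ri Ei); auto.
    + intros [Hx [L [NDL [Len HL]]]].
      destruct L as [|t1 [|t2 [|]]]; try discriminate.
      assert (T1 := proj1 (HL t1) (or_introl eq_refl)).
      assert (T2 := proj1 (HL t2) (or_intror (or_introl eq_refl))).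
      destruct T1 as [R1 E1]. destruct T2 as [R2 E2].
      assert (ne : t1 <> t2) by (inversion NDL; subst; simpl in *; intuition).
      assert (c2 : cos (INR m2 * t2) <> 0).
      { intro C. apply rho_zero with (alpha := alpha) (m1 := m1) in C. congruence. }
      assert (c1 : cos (INR m2 * t1) <> 0).
      { intro C. apply rho_zero with (alpha := alpha) (m1 := m1) in C. congruence. }
      destruct (si_grid m1 m2 alpha t1 t2 h1 h2 hg R1 R2 ne ltac:(congruence) c2) as [j Hj].
      destruct (si_grid m1 m2 alpha t2 t1 h1 h2 hg R2 R1 (not_eq_sym ne) ltac:(congruence) c1) as [i Hi].
      subst t1 t2. apply range_tg in R1; auto. apply range_tg in R2; auto.
      assert (inS : In j S).
      { destruct (In_dec Z.eq_dec j S) as [|nS]; auto. exfalso.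
        assert (i = j) by (apply (Hout j i R1 c1 nS R2); congruence). subst; auto. }
      destruct (repsig j inS) as [r [Hr [Er|Er]]]; subst r.
      * exists j; auto.
      * exists (sg j). split; auto. destruct (Hsg j inS) as [_ [_ C]]. congruence.
  - intros j Hj. destruct (repsig j Hj) as [r [Hr [Er|Er]]]; subst r; eexists; split; eauto.
    apply Hsg; auto.
Qed.

Definition nb (m1 m2 : nat) : nat := if Nat.odd (m1 + m2) then (2 * m2)%nat else m2.

Lemma NN_nb m1 m2 : NN m1 m2 = (2 * Z.of_nat m1 * Z.of_nat (nb m1 m2))%Z.
Proof. unfold NN, nb. destruct (Nat.odd (m1 + m2)); lia. Qed.

Definition zl (n : nat) : list Z := map Z.of_nat (seq 0 n).

Lemma In_zl c n : In c (zl n) <-> (0 <= c < Z.of_nat n)%Z.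
Proof.
  unfold zl. rewrite in_map_iff. split.
  - intros [i [<- Hi]]. apply in_seq in Hi. lia.
  - intro H. exists (Z.to_nat c). split; [lia|]. apply in_seq. lia.
Qed.

Lemma NoDup_zl n : NoDup (zl n).
Proof. unfold zl. apply NoDup_map_on; [apply seq_NoDup|]. intros; lia. Qed.

Lemma length_zl n : length (zl n) = n.
Proof. unfold zl. rewrite length_map, length_seq. auto. Qed.

Lemma same_range (a b n : Z) : (0 <= a < n)%Z -> (0 <= b < n)%Z -> (n | a - b)%Z -> a = b.
Proof. intros Ha Hb [r Hr]. assert (r = 0)%Z by nia. subst. lia. Qed.

Lemma fib_gen m1 m2 alpha l i : (1 <= m1)%nat -> (1 <= m2)%nat -> Nat.gcd m1 m2 = 1%nat ->
  (0 <= l < NN m1 m2)%Z -> (0 <= i < NN m1 m2)%Z -> cos (INR m2 * tg m1 m2 l) <> 0 ->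
  rho m1 m2 alpha (tg m1 m2 i) = rho m1 m2 alpha (tg m1 m2 l) ->
  i = l \/ exists k, (i - l = 2 * Z.of_nat m2 * k)%Z /\
    (2 * Z.of_nat m1 | l + k * (Z.of_nat m1 + Z.of_nat m2))%Z.
Proof.
  intros h1 h2 hg Rl Ri Hc E. destruct (grid_fwd m1 m2 alpha i l h1 h2 E Hc) as [k [Ek [D|D]]].
  - left. apply KEY in D; auto. rewrite <- Ek in D. apply same_range with (NN m1 m2); auto.
  - right. exists k. auto.
Qed.

Lemma isB_cos m1 m2 l : (1 <= m1)%nat -> (1 <= m2)%nat ->
  (2 * Z.of_nat m1 | l)%Z <-> cos (INR m2 * tg m1 m2 l) * cos (INR m2 * tg m1 m2 l) = 1.
Proof.
  intros h1 h2. rewrite grid_bd by auto. split.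
  - intros [c Hc]. exists c. lia.
  - intros [c Hc]. exists c. lia.
Qed.

Lemma isO_cos m1 m2 l : (1 <= m1)%nat -> (1 <= m2)%nat ->
  (Z.of_nat m1 * 2 | l - Z.of_nat m1)%Z <-> cos (INR m2 * tg m1 m2 l) = 0.
Proof.
  intros h1 h2. rewrite grid_zero by auto. split.
  - intros [c Hc]. exists c. lia.
  - intros [c Hc]. exists c. lia.
Qed.

Lemma fibB m1 m2 alpha l i : (1 <= m1)%nat -> (1 <= m2)%nat -> Nat.gcd m1 m2 = 1%nat ->
  (0 <= l < NN m1 m2)%Z -> (0 <= i < NN m1 m2)%Z -> (2 * Z.of_nat m1 | l)%Z ->
  rho m1 m2 alpha (tg m1 m2 i) = rho m1 m2 alpha (tg m1 m2 l) -> i = l.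
Proof.
  intros h1 h2 hg Rl Ri B E.
  assert (Hc : cos (INR m2 * tg m1 m2 l) <> 0).
  { apply (isB_cos m1 m2 l h1 h2) in B. intro C. rewrite C in B. lra. }
  destruct (fib_gen m1 m2 alpha l i h1 h2 hg Rl Ri Hc E) as [|[k [Ek D]]]; auto.
  assert (D2 : (2 * Z.of_nat m1 | k * (Z.of_nat m1 + Z.of_nat m2))%Z).
  { destruct B as [b Hb]. destruct D as [d Hd]. exists (d - b)%Z. lia. }
  apply KEY in D2; auto. rewrite <- Ek in D2. apply same_range with (NN m1 m2); auto.
Qed.

Lemma trav_origin m1 m2 alpha : (1 <= m1)%nat -> (1 <= m2)%nat ->
  traversed m1 m2 alpha (0,0) (nb m1 m2).
Proof.
  intros h1 h2.
  set (J := map (fun c => (Z.of_nat m1 * (2 * c + 1))%Z) (zl (nb m1 m2))).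
  replace (nb m1 m2) with (length J) by (unfold J; rewrite length_map; apply length_zl).
  apply trav_grid; auto.
  - unfold J. apply NoDup_map_on; [apply NoDup_zl|]. intros; nia.
  - intros t _ E. apply rho_zero in E. destruct (zero_grid m1 m2 t h1 h2 E) as [c ->]. eauto.
  - intro j. unfold J. rewrite in_map_iff. rewrite rho_zero, grid_zero by auto.
    rewrite NN_nb. split.
    + intros [c [<- Hc]]. apply In_zl in Hc. split; [nia|]. eauto.
    + intros [R [c Hc]]. exists c. split; auto. apply In_zl. nia.
Qed.

Lemma norm1 m1 m2 alpha t :
  sqrt (fst (rho m1 m2 alpha t) * fst (rho m1 m2 alpha t) + snd (rho m1 m2 alpha t) * snd (rho m1 m2 alpha t)) = 1
  <-> cos (INR m2 * t) * cos (INR m2 * t) = 1.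
Proof.
  assert (N : fst (rho m1 m2 alpha t) * fst (rho m1 m2 alpha t) + snd (rho m1 m2 alpha t) * snd (rho m1 m2 alpha t) = cos (INR m2 * t) * cos (INR m2 * t)) by apply rho_norm. rewrite N. split.
  - intro H. pose proof (sqrt_sqrt (cos (INR m2 * t) * cos (INR m2 * t))).
    rewrite H in H0. assert (0 <= cos (INR m2 * t) * cos (INR m2 * t)) by nra. lra.
  - intro H. rewrite H. apply sqrt_1.
Qed.

Lemma card_bd m1 m2 alpha : (1 <= m1)%nat -> (1 <= m2)%nat -> Nat.gcd m1 m2 = 1%nat ->
  let Bl := map (fun c => rho m1 m2 alpha (tg m1 m2 (2 * Z.of_nat m1 * c))) (zl (nb m1 m2)) in
  NoDup Bl /\ length Bl = nb m1 m2 /\ (forall x, In x Bl <-> boundary_point m1 m2 alpha x).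
Proof.
  intros h1 h2 hg Bl. split; [|split].
  - apply NoDup_map_on; [apply NoDup_zl|]. intros a b Ha Hb E.
    apply In_zl in Ha. apply In_zl in Hb.
    assert (2 * Z.of_nat m1 * a = 2 * Z.of_nat m1 * b)%Z.
    { apply fibB with m1 m2 alpha; auto; try (rewrite NN_nb; nia). exists b; ring. }
    nia.
  - unfold Bl. rewrite length_map. apply length_zl.
  - intro x. unfold Bl. rewrite in_map_iff. split.
    + intros [c [<- Hc]]. split; [eexists; eauto|]. apply norm1.
      apply isB_cos; auto. exists c. lia.
    + intros [[t <-] Hn]. apply norm1 in Hn. destruct (bd_grid m1 m2 t h1 h2 Hn) as [c ->].
      pose proof (NN_nb m1 m2). assert (0 < Z.of_nat (nb m1 m2))%Z by (unfold nb; destruct (Nat.odd (m1+m2)); lia).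
      exists (c mod Z.of_nat (nb m1 m2))%Z. split.
      * replace (2 * Z.of_nat m1 * c)%Z with (2 * Z.of_nat m1 * (c mod Z.of_nat (nb m1 m2)) + NN m1 m2 * (c / Z.of_nat (nb m1 m2)))%Z.
        -- symmetry. apply grid_per; auto.
        -- rewrite H. pose proof (Z.div_mod c (Z.of_nat (nb m1 m2)) ltac:(lia)). nia.
      * apply In_zl. apply Z.mod_pos_bound. lia.
Qed.

Lemma pair_props m1 m2 alpha j i k : (1 <= m1)%nat -> (1 <= m2)%nat -> Nat.gcd m1 m2 = 1%nat ->
  (0 <= j < NN m1 m2)%Z -> (0 <= i < NN m1 m2)%Z -> cos (INR m2 * tg m1 m2 j) <> 0 ->
  ~ (2 * Z.of_nat m1 | j)%Z ->
  (i - j = 2 * Z.of_nat m2 * k)%Z -> (2 * Z.of_nat m1 | j + k * (Z.of_nat m1 + Z.of_nat m2))%Z ->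
  i <> j /\ rho m1 m2 alpha (tg m1 m2 i) = rho m1 m2 alpha (tg m1 m2 j) /\
  cos (INR m2 * tg m1 m2 i) <> 0 /\ ~ (2 * Z.of_nat m1 | i)%Z /\
  (forall i', (0 <= i' < NN m1 m2)%Z -> rho m1 m2 alpha (tg m1 m2 i') = rho m1 m2 alpha (tg m1 m2 j) ->
     i' = j \/ i' = i).
Proof.
  intros h1 h2 hg Rj Ri Hc nB Ek D.
  assert (E : rho m1 m2 alpha (tg m1 m2 i) = rho m1 m2 alpha (tg m1 m2 j)) by (eapply grid_bwd; eauto).
  assert (ne : i <> j).
  { intro Eij. subst i. assert (k = 0)%Z by lia. subst k. apply nB.
    destruct D as [d Hd]. exists d. lia. }
  split; auto. split; auto. split; [|split].
  - intro C. apply (rho_zero m1 m2 alpha) in C. apply Hc. apply (rho_zero m1 m2 alpha). congruence.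
  - intro B. apply ne. symmetry. apply fibB with m1 m2 alpha; auto.
  - intros i' Ri' E'. destruct (fib_gen m1 m2 alpha j i' h1 h2 hg Rj Ri' Hc E') as [|[k' [Ek' D']]]; auto.
    right. assert (D2 : (2 * Z.of_nat m1 | (k' - k) * (Z.of_nat m1 + Z.of_nat m2))%Z).
    { destruct D as [d Hd]. destruct D' as [d' Hd']. exists (d' - d)%Z. lia. }
    apply KEY in D2; auto. apply same_range with (NN m1 m2); auto.
    replace (i' - i)%Z with (2 * Z.of_nat m2 * (k' - k))%Z by lia. auto.
Qed.

Definition R12 (m1 : nat) : list Z :=
  map (fun i => 1 + Z.of_nat i)%Z (seq 0 (m1 - 1)) ++
  map (fun i => Z.of_nat m1 + 1 + Z.of_nat i)%Z (seq 0 (m1 - 1)).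

Lemma In_R12 m1 r : (1 <= m1)%nat ->
  In r (R12 m1) <-> (0 < r < 2 * Z.of_nat m1 /\ r <> Z.of_nat m1)%Z.
Proof.
  intro h1. unfold R12. rewrite in_app_iff, !in_map_iff. split.
  - intros [[i [<- Hi]]|[i [<- Hi]]]; apply in_seq in Hi; lia.
  - intro H. destruct (Z_lt_le_dec r (Z.of_nat m1)).
    + left. exists (Z.to_nat (r - 1)). split; [lia|]. apply in_seq. lia.
    + right. exists (Z.to_nat (r - Z.of_nat m1 - 1)). split; [lia|]. apply in_seq. lia.
Qed.

Lemma NoDup_R12 m1 : (1 <= m1)%nat -> NoDup (R12 m1).
Proof.
  intro h1. unfold R12. apply NoDup_app.
  - apply NoDup_map_on; [apply seq_NoDup|]. intros; lia.
  - apply NoDup_map_on; [apply seq_NoDup|]. intros; lia.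
  - intros a Ha Hb. apply in_map_iff in Ha. apply in_map_iff in Hb.
    destruct Ha as [i [<- Hi]]. destruct Hb as [i' [E Hi']]. apply in_seq in Hi. apply in_seq in Hi'. lia.
Qed.

Lemma length_R12 m1 : length (R12 m1) = (2 * (m1 - 1))%nat.
Proof. unfold R12. rewrite length_app, !length_map, length_seq. lia. Qed.

Lemma no_mult (r n e : Z) : (0 < n)%Z -> (- n < r < n)%Z -> r <> 0%Z -> r = (n * e)%Z -> False.
Proof. intros. destruct (Z_le_gt_dec e 0); [destruct (Z.eq_dec e 0)|]; subst; nia. Qed.

Lemma decomp (j d : Z) : (0 < d)%Z -> j = (d * (j / d) + j mod d)%Z /\ (0 <= j mod d < d)%Z.
Proof. intro. split; [apply Z.div_mod; lia| apply Z.mod_pos_bound; lia]. Qed.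

Lemma odd_double m1 m2 alpha : (1 <= m1)%nat -> (1 <= m2)%nat -> Nat.gcd m1 m2 = 1%nat ->
  Nat.odd (m1 + m2) = true ->
  exists Dl : list (R * R), NoDup Dl /\ length Dl = (2 * (m1 - 1) * m2)%nat /\
   (forall x, In x Dl <-> x <> (0,0) /\ ordinary_double_point m1 m2 alpha x) /\
   (forall x, In x Dl -> exists j, (0 <= j < NN m1 m2)%Z /\
       cos (INR m2 * tg m1 m2 j) * cos (INR m2 * tg m1 m2 j) <> 1 /\ x = rho m1 m2 alpha (tg m1 m2 j)) /\
   (forall j, (0 <= j < NN m1 m2)%Z -> ~ (2 * Z.of_nat m1 | j)%Z -> cos (INR m2 * tg m1 m2 j) <> 0 ->
       In (rho m1 m2 alpha (tg m1 m2 j)) Dl /\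
       exists i, (0 <= i < NN m1 m2)%Z /\ i <> j /\
         rho m1 m2 alpha (tg m1 m2 i) = rho m1 m2 alpha (tg m1 m2 j)).
Proof.
  intros h1 h2 hg Ho.
  set (z1 := Z.of_nat m1). set (z2 := Z.of_nat m2).
  assert (NNe : NN m1 m2 = (4 * z1 * z2)%Z) by (unfold NN; rewrite Ho; auto).
  assert (nbe : nb m1 m2 = (2 * m2)%nat) by (unfold nb; rewrite Ho; auto).
  destruct (bezout_Z m1 m2 h1 hg) as [u [v Huv]].
  destruct (parity_cases m1 m2) as [[_ [h Hh]]|[Ho' _]]; [|congruence].
  assert (R1 : rel_prime (2 * z1) (z1 + z2)).
  { apply rel_prime_sym. apply rel_prime_mult.
    - apply bezout_rel_prime. apply (Bezout_intro _ _ _ 1 (- h)). lia.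
    - apply bezout_rel_prime. apply (Bezout_intro _ _ _ v (u - v)). lia. }
  destruct (rel_prime_bezout _ _ R1) as [bx y Hxy].
  set (S := map (fun p => 2 * z1 * fst p + snd p)%Z (list_prod (zl (nb m1 m2)) (R12 m1))).
  assert (InS : forall j, In j S <-> ((0 <= j < NN m1 m2)%Z /\ ~ (2 * z1 | j)%Z /\ ~ (z1 * 2 | j - z1)%Z)).
  { intro j. unfold S. rewrite in_map_iff. split.
    - intros [[c r] [<- Hp]]. apply in_prod_iff in Hp. destruct Hp as [Hc Hr].
      apply In_zl in Hc. apply In_R12 in Hr; auto. cbn [fst snd]. rewrite nbe in Hc. fold z1 in Hr.
      assert (Hc2 : (0 <= c < 2 * z2)%Z) by lia. clear Hc.
      split; [|split].
      + rewrite NNe. assert (2*z1*(c+1) <= 2*z1*(2*z2))%Z by (apply Z.mul_le_mono_nonneg_l; lia).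
        assert (0 <= 2 * z1 * c)%Z by (apply Z.mul_nonneg_nonneg; lia). lia.
      + intros [d Hd]. apply (no_mult r (2 * z1) (d - c)); try lia.
      + intros [d Hd]. apply (no_mult (r - z1) (2 * z1) (d - c)); try lia.
    - intros [R [nB nO]]. assert (Hz : (0 < 2 * z1)%Z) by lia.
      destruct (decomp j (2 * z1) Hz) as [Ej Bj].
      exists (j / (2 * z1), j mod (2 * z1))%Z. cbn [fst snd]. split; [lia|].
      apply in_prod_iff. split.
      + apply In_zl. rewrite nbe. rewrite NNe in R.
        assert (0 <= j / (2 * z1) < 2 * z2)%Z by nia. lia.
      + apply In_R12; auto. fold z1. split; [split|].
        * destruct (Z.eq_dec (j mod (2 * z1)) 0) as [E0|E0]; [|lia].
          exfalso. apply nB. exists (j / (2 * z1))%Z. lia.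
        * lia.
        * intro E0. apply nO. exists (j / (2 * z1))%Z. lia. }
  assert (NDS : NoDup S).
  { unfold S. apply NoDup_map_on.
    - apply NoDup_list_prod; [apply NoDup_zl|apply NoDup_R12; auto].
    - intros [c r] [c' r'] Hp Hp' E. cbn [fst snd] in E.
      apply in_prod_iff in Hp. apply in_prod_iff in Hp'.
      destruct Hp as [_ Hr]. destruct Hp' as [_ Hr'].
      apply In_R12 in Hr; auto. apply In_R12 in Hr'; auto. fold z1 in Hr, Hr'.
      assert (c = c') by nia. subst c'. f_equal. lia. }
  assert (LS : length S = (2 * m2 * (2 * (m1 - 1)))%nat).
  { unfold S. rewrite length_map, length_prod, length_zl, length_R12, nbe. auto. }
  set (sg := fun j => ((j + 2 * z2 * (- j * y)) mod NN m1 m2)%Z).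
  assert (SG : forall j, In j S ->
     exists k, (0 <= sg j < NN m1 m2)%Z /\ (sg j - j = 2 * z2 * k)%Z /\
               (2 * z1 | j + k * (z1 + z2))%Z).
  { intros j Hj. pose proof (NN_pos m1 m2 h1 h2) as Np.
    destruct (decomp (j + 2 * z2 * (- j * y)) (NN m1 m2) Np) as [E B].
    set (q := ((j + 2 * z2 * (- j * y)) / NN m1 m2)%Z) in *.
    exists (- j * y - 2 * z1 * q)%Z. split; [|split].
    - exact B.
    - unfold sg. rewrite NNe in E |- *. lia.
    - exists (j * bx - q * (z1 + z2))%Z.
      assert (Eq : (j + (- j * y - 2 * z1 * q) * (z1 + z2) - (j * bx - q * (z1 + z2)) * (2 * z1)
                   = j * (1 - (bx * (2 * z1) + y * (z1 + z2))))%Z) by ring.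
      rewrite Hxy in Eq. lia. }
  assert (HS : forall j, In j S -> (0 <= j < NN m1 m2)%Z /\ cos (INR m2 * tg m1 m2 j) <> 0).
  { intros j Hj. apply InS in Hj. destruct Hj as [R [nB nO]]. split; auto.
    intro C. apply nO. exact (proj2 (isO_cos m1 m2 j h1 h2) C). }
  assert (PP : forall j, In j S -> exists k : Z, (0 <= sg j < NN m1 m2)%Z /\
    (sg j <> j /\ rho m1 m2 alpha (tg m1 m2 (sg j)) = rho m1 m2 alpha (tg m1 m2 j) /\
     cos (INR m2 * tg m1 m2 (sg j)) <> 0 /\ ~ (2 * Z.of_nat m1 | sg j)%Z /\
     (forall i', (0 <= i' < NN m1 m2)%Z -> rho m1 m2 alpha (tg m1 m2 i') = rho m1 m2 alpha (tg m1 m2 j) ->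
        i' = j \/ i' = sg j))).
  { intros j Hj. destruct (SG j Hj) as [k [Rk [Ek Dk]]]. destruct (HS j Hj) as [Rj Cj].
    exists k. split; [exact Rk|].
    apply (pair_props m1 m2 alpha j (sg j) k h1 h2 hg Rj Rk Cj); auto.
    apply InS in Hj. tauto. }
  assert (Hsg : forall j, In j S -> In (sg j) S /\ sg j <> j /\
      rho m1 m2 alpha (tg m1 m2 (sg j)) = rho m1 m2 alpha (tg m1 m2 j)).
  { intros j Hj. destruct (PP j Hj) as [k [Rk [A [B [C [D _]]]]]]. split; auto.
    apply InS. split; auto. split; auto. intro O. apply C. exact (proj1 (isO_cos m1 m2 _ h1 h2) O). }
  assert (Huniq : forall j i, In j S -> (0 <= i < NN m1 m2)%Z ->
      rho m1 m2 alpha (tg m1 m2 i) = rho m1 m2 alpha (tg m1 m2 j) -> i = j \/ i = sg j).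
  { intros j i Hj Ri E. destruct (PP j Hj) as [k [Rk [A [B [C [D F]]]]]]. apply F; auto. }
  assert (Hout : forall j i, (0 <= j < NN m1 m2)%Z -> cos (INR m2 * tg m1 m2 j) <> 0 -> ~ In j S ->
      (0 <= i < NN m1 m2)%Z ->
      rho m1 m2 alpha (tg m1 m2 i) = rho m1 m2 alpha (tg m1 m2 j) -> i = j).
  { intros j i Rj Cj nS Ri E. apply fibB with m1 m2 alpha; auto.
    destruct (Znumtheory.Zdivide_dec (2 * z1) j) as [|nB]; auto. exfalso. apply nS. apply InS.
    split; auto. split; auto. intro O. apply Cj. exact (proj1 (isO_cos m1 m2 _ h1 h2) O). }
  destruct (double_gen m1 m2 alpha S sg h1 h2 hg NDS HS Hsg Huniq Hout) as [L2 [ND [Hin Hrep]]].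
  set (Rp := filter (fun x => Z.ltb x (sg x)) S) in *.
  exists (map (fun j => rho m1 m2 alpha (tg m1 m2 j)) Rp). split; [|split; [|split; [|split]]].
  - exact ND.
  - rewrite length_map. lia.
  - exact Hin.
  - intros x Hx. apply in_map_iff in Hx. destruct Hx as [j [<- Hj]].
    apply filter_In in Hj. destruct Hj as [Hj _]. exists j. apply InS in Hj.
    destruct Hj as [R [nB _]]. split; auto. split; auto. intro C. apply nB. exact (proj2 (isB_cos m1 m2 _ h1 h2) C).
  - intros j Rj nB Cj.
    assert (Hj : In j S) by (apply InS; split; auto; split; auto; intro O; apply Cj; exact (proj1 (isO_cos m1 m2 _ h1 h2) O)).
    split.
    + destruct (Hrep j Hj) as [r [Hr Er]]. apply in_map_iff. exists r; auto.
    + destruct (Hsg j Hj) as [A [B C]]. exists (sg j). split; auto. apply (HS _ A).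
Qed.

Definition R1l (m1 : nat) : list Z := map (fun i => 1 + Z.of_nat i)%Z (seq 0 (m1 - 1)).

Lemma even_double m1 m2 alpha : (1 <= m1)%nat -> (1 <= m2)%nat -> Nat.gcd m1 m2 = 1%nat ->
  Nat.odd (m1 + m2) = false ->
  exists n : nat, (2 * n = (m1 - 1) * m2)%nat /\
    has_card (fun x => x <> (0, 0) /\ ordinary_double_point m1 m2 alpha x) n.
Proof.
  intros h1 h2 hg Ho.
  set (z1 := Z.of_nat m1). set (z2 := Z.of_nat m2).
  assert (NNe : NN m1 m2 = (2 * z1 * z2)%Z) by (unfold NN; rewrite Ho; auto).
  destruct (bezout_Z m1 m2 h1 hg) as [u [v Huv]].
  destruct (parity_cases m1 m2) as [[Ho' _]|[_ [h Hh]]]; [congruence|].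
  fold z1 z2 in Hh, Huv.
  assert (z1odd : exists a, z1 = (2 * a + 1)%Z).
  { destruct (Z.Even_or_Odd z1) as [[a Ha]|[a Ha]]; [|eauto].
    exfalso. assert (D : (2 | 1)%Z).
    { exists (u * a + v * (h - a))%Z. rewrite <- Huv.
      replace z2 with (2 * h - z1)%Z by lia. rewrite Ha. ring. }
    destruct D as [e He]. lia. }
  destruct z1odd as [a Ha].
  assert (R1 : rel_prime z1 h).
  { apply bezout_rel_prime. apply (Bezout_intro _ _ _ (u - v) (2 * v)). lia. }
  destruct (rel_prime_bezout _ _ R1) as [bx y Hxy].
  set (S := map (fun p => 2 * z1 * fst p + 2 * snd p)%Z (list_prod (zl m2) (R1l m1))).
  assert (InR : forall r, In r (R1l m1) <-> (0 < r < z1)%Z).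
  { intro r. unfold R1l. rewrite in_map_iff. split.
    - intros [i [<- Hi]]. apply in_seq in Hi. unfold z1. lia.
    - intro H. exists (Z.to_nat (r - 1)). split; [lia|]. apply in_seq. unfold z1 in H. lia. }
  assert (InS : forall j, In j S <-> ((0 <= j < NN m1 m2)%Z /\ ~ (2 * z1 | j)%Z /\ (2 | j)%Z)).
  { intro j. unfold S. rewrite in_map_iff. split.
    - intros [[c r] [<- Hp]]. apply in_prod_iff in Hp. destruct Hp as [Hc Hr].
      apply In_zl in Hc. apply InR in Hr. cbn [fst snd]. fold z2 in Hc.
      split; [|split].
      + rewrite NNe. assert (2*z1*(c+1) <= 2*z1*z2)%Z by (apply Z.mul_le_mono_nonneg_l; lia).
        assert (0 <= 2 * z1 * c)%Z by (apply Z.mul_nonneg_nonneg; lia). lia.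
      + intros [d Hd]. apply (no_mult (2 * r) (2 * z1) (d - c)); try lia.
      + exists (z1 * c + r)%Z. ring.
    - intros [R [nB [e He]]]. assert (Hz : (0 < 2 * z1)%Z) by lia.
      destruct (decomp j (2 * z1) Hz) as [Ej Bj].
      set (c := (j / (2 * z1))%Z) in *.
      exists (c, e - z1 * c)%Z. cbn [fst snd]. split; [lia|].
      apply in_prod_iff. split.
      + apply In_zl. fold z2. rewrite NNe in R.
        assert (0 <= c < z2)%Z; [|lia]. unfold c. split; [apply Z.div_pos; lia|].
        apply Z.div_lt_upper_bound; lia.
      + apply InR. split.
        * destruct (Z.eq_dec (j mod (2 * z1)) 0) as [E0|E0]; [|lia].
          exfalso. apply nB. exists c. lia.
        * lia. }
  assert (NDS : NoDup S).
  { unfold S. apply NoDup_map_on.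
    - apply NoDup_list_prod; [apply NoDup_zl|]. unfold R1l.
      apply NoDup_map_on; [apply seq_NoDup|]. intros; lia.
    - intros [c r] [c' r'] Hp Hp' E. cbn [fst snd] in E.
      apply in_prod_iff in Hp. apply in_prod_iff in Hp'.
      destruct Hp as [_ Hr]. destruct Hp' as [_ Hr'].
      apply InR in Hr. apply InR in Hr'.
      assert (c = c') by nia. subst c'. f_equal. lia. }
  assert (LS : length S = (m2 * (m1 - 1))%nat).
  { unfold S. rewrite length_map, length_prod, length_zl. unfold R1l. rewrite length_map, length_seq. auto. }
  set (sg := fun j => ((j + 2 * z2 * (- (j / 2) * y)) mod NN m1 m2)%Z).
  assert (SG : forall j, In j S ->
     exists k, (0 <= sg j < NN m1 m2)%Z /\ (sg j - j = 2 * z2 * k)%Z /\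
               (2 * z1 | j + k * (z1 + z2))%Z).
  { intros j Hj. pose proof (NN_pos m1 m2 h1 h2) as Np.
    apply InS in Hj. destruct Hj as [_ [_ [e He]]].
    assert (Ee : (j / 2 = e)%Z) by (rewrite He; apply Z.div_mul; lia).
    destruct (decomp (j + 2 * z2 * (- (j / 2) * y)) (NN m1 m2) Np) as [E B].
    set (q := ((j + 2 * z2 * (- (j / 2) * y)) / NN m1 m2)%Z) in *.
    rewrite Ee in E. 
    exists (- e * y - z1 * q)%Z. split; [|split].
    - exact B.
    - unfold sg. rewrite Ee. rewrite NNe in E |- *. lia.
    - exists (e * bx - q * h)%Z.
      assert (Eq : (j + (- e * y - z1 * q) * (z1 + z2) - (e * bx - q * h) * (2 * z1)
                   = 2 * e * (1 - (bx * z1 + y * h)))%Z) by (rewrite Hh, He; ring).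
      rewrite Hxy in Eq. lia. }
  assert (HS : forall j, In j S -> (0 <= j < NN m1 m2)%Z /\ cos (INR m2 * tg m1 m2 j) <> 0).
  { intros j Hj. apply InS in Hj. destruct Hj as [R [nB [e He]]]. split; auto.
    intro C. apply (proj2 (isO_cos m1 m2 j h1 h2)) in C. destruct C as [d Hd]. fold z1 in Hd. lia. }
  assert (PP : forall j, In j S -> exists k : Z, (0 <= sg j < NN m1 m2)%Z /\
    (sg j - j = 2 * z2 * k)%Z /\
    (sg j <> j /\ rho m1 m2 alpha (tg m1 m2 (sg j)) = rho m1 m2 alpha (tg m1 m2 j) /\
     cos (INR m2 * tg m1 m2 (sg j)) <> 0 /\ ~ (2 * Z.of_nat m1 | sg j)%Z /\
     (forall i', (0 <= i' < NN m1 m2)%Z -> rho m1 m2 alpha (tg m1 m2 i') = rho m1 m2 alpha (tg m1 m2 j) ->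
        i' = j \/ i' = sg j))).
  { intros j Hj. destruct (SG j Hj) as [k [Rk [Ek Dk]]]. destruct (HS j Hj) as [Rj Cj].
    exists k. split; [exact Rk|]. split; [exact Ek|].
    apply (pair_props m1 m2 alpha j (sg j) k h1 h2 hg Rj Rk Cj); auto.
    apply InS in Hj. tauto. }
  assert (Hsg : forall j, In j S -> In (sg j) S /\ sg j <> j /\
      rho m1 m2 alpha (tg m1 m2 (sg j)) = rho m1 m2 alpha (tg m1 m2 j)).
  { intros j Hj. destruct (PP j Hj) as [k [Rk [Ek [A [B [C [D _]]]]]]]. split; auto.
    apply InS. split; auto. split; auto. apply InS in Hj. destruct Hj as [_ [_ [e He]]].
    exists (e + z2 * k)%Z. lia. }
  assert (Huniq : forall j i, In j S -> (0 <= i < NN m1 m2)%Z ->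
      rho m1 m2 alpha (tg m1 m2 i) = rho m1 m2 alpha (tg m1 m2 j) -> i = j \/ i = sg j).
  { intros j i Hj Ri E. destruct (PP j Hj) as [k [Rk [Ek [A [B [C [D F]]]]]]]. apply F; auto. }
  assert (Hout : forall j i, (0 <= j < NN m1 m2)%Z -> cos (INR m2 * tg m1 m2 j) <> 0 -> ~ In j S ->
      (0 <= i < NN m1 m2)%Z ->
      rho m1 m2 alpha (tg m1 m2 i) = rho m1 m2 alpha (tg m1 m2 j) -> i = j).
  { intros j i Rj Cj nS Ri E.
    destruct (Znumtheory.Zdivide_dec (2 * z1) j) as [B|nB].
    - apply fibB with m1 m2 alpha; auto.
    - destruct (Znumtheory.Zdivide_dec 2 j) as [Ev|nEv].
      + exfalso. apply nS. apply InS. auto.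
      + destruct (fib_gen m1 m2 alpha j i h1 h2 hg Rj Ri Cj E) as [|[k [Ek [d Hd]]]]; auto.
        exfalso. apply nEv. exists (d * z1 - k * h)%Z. fold z1 z2 in Hd. lia. }
  destruct (double_gen m1 m2 alpha S sg h1 h2 hg NDS HS Hsg Huniq Hout) as [L2 [ND [Hin Hrep]]].
  set (Rp := filter (fun x => Z.ltb x (sg x)) S) in *.
  exists (length Rp). split; [lia|].
  exists (map (fun j => rho m1 m2 alpha (tg m1 m2 j)) Rp). split; [|split].
  - exact ND.
  - rewrite length_map. auto.
  - exact Hin.
Qed.

Lemma LS_iff m1 m2 alpha x : (1 <= m1)%nat -> (1 <= m2)%nat ->
  LS m1 m2 alpha x <-> exists j, (0 <= j < 4 * Z.of_nat m1 * Z.of_nat m2)%Z /\ x = rho m1 m2 alpha (tg m1 m2 j).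
Proof.
  intros h1 h2. unfold LS, tg. split.
  - intros [l [Hl ->]]. exists (Z.of_nat l). split; [lia|]. rewrite <- (INR_IZR_INZ l). auto.
  - intros [j [Hj ->]]. exists (Z.to_nat j). split; [lia|]. rewrite (INR_IZR_INZ (Z.to_nat j)). rewrite Z2Nat.id by lia. auto.
Qed.

Lemma zero_not_bd m1 m2 alpha : ~ boundary_point m1 m2 alpha (0,0).
Proof. intros [_ H]. simpl in H. rewrite Rmult_0_l, Rplus_0_l, sqrt_0 in H. lra. Qed.

Theorem corollary2p2 (m1 m2 : nat) (alpha : R) :
  (1 <= m1)%nat -> (1 <= m2)%nat -> Nat.gcd m1 m2 = 1%nat ->
  (Nat.odd (m1 + m2) = true ->
     (forall x : R * R, LS m1 m2 alpha x <->
        (self_intersection m1 m2 alpha x \/ boundary_point m1 m2 alpha x)) /\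
     has_card (LS m1 m2 alpha) (2 * m1 * m2 + 1) /\
     LS m1 m2 alpha (0, 0) /\
     traversed m1 m2 alpha (0, 0) (2 * m2) /\
     has_card (fun x => x <> (0, 0) /\ ordinary_double_point m1 m2 alpha x)
              (2 * (m1 - 1) * m2) /\
     has_card (boundary_point m1 m2 alpha) (2 * m2) /\
     (forall x, LS m1 m2 alpha x ->
        x = (0, 0) \/ (x <> (0, 0) /\ ordinary_double_point m1 m2 alpha x)
        \/ boundary_point m1 m2 alpha x)) /\
  (Nat.odd (m1 + m2) = false ->
     (exists n : nat, (2 * n = (m1 - 1) * m2)%nat /\
        has_card (fun x => x <> (0, 0) /\ ordinary_double_point m1 m2 alpha x) n) /\
     has_card (boundary_point m1 m2 alpha) m2 /\
     traversed m1 m2 alpha (0, 0) m2).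
Proof.
  intros h1 h2 hg. split; intro Ho.
  2:{ assert (nbe : nb m1 m2 = m2) by (unfold nb; rewrite Ho; auto).
      split; [apply even_double; auto|]. split.
      - destruct (card_bd m1 m2 alpha h1 h2 hg) as [A [B C]].
        eexists; split; [exact A|split; [rewrite B; exact nbe|exact C]].
      - pose proof (trav_origin m1 m2 alpha h1 h2) as T. rewrite nbe in T. exact T. }
  set (z1 := Z.of_nat m1). set (z2 := Z.of_nat m2).
  assert (NNe : NN m1 m2 = (4 * z1 * z2)%Z) by (unfold NN; rewrite Ho; auto).
  assert (nbe : nb m1 m2 = (2 * m2)%nat) by (unfold nb; rewrite Ho; auto).
  destruct (card_bd m1 m2 alpha h1 h2 hg) as [NDB [LB InB]].
  set (Bl := map (fun c => rho m1 m2 alpha (tg m1 m2 (2 * Z.of_nat m1 * c))) (zl (nb m1 m2))) in *.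
  destruct (odd_double m1 m2 alpha h1 h2 hg Ho) as [Dl [NDD [LD [InD [DlJ Djs]]]]].
  assert (LSj : forall x, LS m1 m2 alpha x <-> exists j, (0 <= j < NN m1 m2)%Z /\ x = rho m1 m2 alpha (tg m1 m2 j)).
  { intro x. rewrite LS_iff, NNe by auto. tauto. }
  assert (Rz1 : (0 <= z1 * (2 * 0 + 1) < NN m1 m2)%Z) by (rewrite NNe; nia).
  assert (Rz3 : (0 <= z1 * (2 * 1 + 1) < NN m1 m2)%Z) by (rewrite NNe; nia).
  assert (O1 : rho m1 m2 alpha (tg m1 m2 (z1 * (2 * 0 + 1))) = (0,0)).
  { apply rho_zero. apply grid_zero; auto. exists 0%Z. auto. }
  assert (O3 : rho m1 m2 alpha (tg m1 m2 (z1 * (2 * 1 + 1))) = (0,0)).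
  { apply rho_zero. apply grid_zero; auto. exists 1%Z. auto. }
  assert (LS0 : LS m1 m2 alpha (0,0)) by (apply LSj; eexists; split; [exact Rz1|auto]).
  assert (Bnd : forall j, (2 * z1 | j)%Z -> boundary_point m1 m2 alpha (rho m1 m2 alpha (tg m1 m2 j))).
  { intros j Bj. split; [eexists; eauto|]. apply norm1. apply isB_cos; auto. }
  assert (BLS : forall x, boundary_point m1 m2 alpha x -> LS m1 m2 alpha x).
  { intros x Hx. apply InB in Hx. apply in_map_iff in Hx. destruct Hx as [c [<- Hc]].
    apply In_zl in Hc. rewrite nbe in Hc. apply LSj. eexists; split; [|reflexivity].
    rewrite NNe. split; [nia|].
    assert (2*z1*(c+1) <= 2*z1*(2*z2))%Z by (apply Z.mul_le_mono_nonneg_l; lia). lia. }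
  assert (DLS : forall x, In x Dl -> LS m1 m2 alpha x).
  { intros x Hx. destruct (DlJ x Hx) as [j [Rj [_ ->]]]. apply LSj. eauto. }
  assert (Class : forall j, (0 <= j < NN m1 m2)%Z ->
    rho m1 m2 alpha (tg m1 m2 j) = (0,0) \/ (2 * z1 | j)%Z \/
    (~ (2 * z1 | j)%Z /\ cos (INR m2 * tg m1 m2 j) <> 0)).
  { intros j Rj. destruct (Req_dec_T (cos (INR m2 * tg m1 m2 j)) 0) as [C|C].
    - left. apply rho_zero; auto.
    - destruct (Znumtheory.Zdivide_dec (2 * z1) j); auto. }
  split; [|split; [|split; [|split; [|split; [|split]]]]].
  - intro x. split.
    + intro H. apply LSj in H. destruct H as [j [Rj ->]].
      destruct (Class j Rj) as [Z|[B|[nB C]]].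
      * left. rewrite Z. exists (tg m1 m2 (z1 * (2 * 0 + 1))), (tg m1 m2 (z1 * (2 * 1 + 1))).
        split; [intro E; apply tg_inj in E; auto; lia|].
        split; [apply range_tg; auto|]. split; [apply range_tg; auto|]. auto.
      * right. apply Bnd; auto.
      * left. destruct (Djs j Rj nB C) as [_ [i [Ri [ne Ei]]]].
        exists (tg m1 m2 j), (tg m1 m2 i). split; [intro E; apply tg_inj in E; auto|].
        split; [apply range_tg; auto|]. split; [apply range_tg; auto|]. auto.
    + intros [[t1 [t2 [ne [R1 [R2 [E1 E2]]]]]]|B]; [|apply BLS; auto].
      destruct (Req_dec_T (cos (INR m2 * t2)) 0) as [C|C].
      * apply (rho_zero m1 m2 alpha) in C. rewrite C in E2. rewrite <- E2. exact LS0.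
      * destruct (si_grid m1 m2 alpha t1 t2 h1 h2 hg R1 R2 ne ltac:(congruence) C) as [j ->].
        apply range_tg in R1; auto. apply LSj. eauto.
  - exists ((0,0) :: Bl ++ Dl). split; [|split].
    + constructor.
      * rewrite in_app_iff. intros [H|H].
        -- apply InB in H. apply (zero_not_bd m1 m2 alpha); auto.
        -- apply InD in H. tauto.
      * apply NoDup_app; auto. intros x HB HD. apply InB in HB.
        destruct (DlJ x HD) as [j [_ [C ->]]]. destruct HB as [_ HB]. apply norm1 in HB. auto.
    + simpl. rewrite length_app, LB, LD, nbe. destruct m1; [lia|]. nia.
    + intro x. split.
      * intros [<-|H]; auto. apply in_app_iff in H. destruct H as [H|H].
        -- apply BLS, InB; auto.
        -- apply DLS; auto.
      * intro H. apply LSj in H. destruct H as [j [Rj ->]].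
        destruct (Class j Rj) as [Z|[B|[nB C]]].
        -- left. auto.
        -- right. apply in_app_iff. left. apply InB. apply Bnd; auto.
        -- right. apply in_app_iff. right. apply (Djs j Rj nB C).
  - exact LS0.
  - rewrite <- nbe. apply trav_origin; auto.
  - exists Dl. auto.
  - exists Bl. rewrite LB, nbe. auto.
  - intros x H. apply LSj in H. destruct H as [j [Rj ->]].
    destruct (Class j Rj) as [Z|[B|[nB C]]].
    + left. auto.
    + right. right. apply Bnd; auto.
    + right. left. apply InD. apply (Djs j Rj nB C).
Qed.
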